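(* Let $n$ be a positive integer and let $x$ be a complex number such that no denominator below vanishes. Then \[ \sum_{k=0}^{n}(-1)^k\binom{n}{k}\frac{\binom{2x+k}{k}}{\binom{2x+n+k}{k}} \frac{1+2x+2k}{1+2x+n+k}H_{k}^2(x) =\frac{1}{2n}\frac{\binom{2x+n}{n}}{\binom{x+n}{n}^2}\big\{H_{n-1}-H_{n}(x)\big\}, \] where $H_k^2(x)$ denotes $(H_k(x))^2$.
   Context: For complex $z$ and a nonnegative integer $k$, $\binom{z}{k}=\frac{z(z-1)\cdots(z-k+1)}{k!}$ (with $\binom{z}{0}=1$). For complex $x$ and nonnegative integer $m$, $H_0(x)=0$ and $H_m(x)=\sum_{j=1}^m\frac{1}{x+j}$; $H_m=H_m(0)=\sum_{j=1}^m\frac1j$. The parameter $x$ is assumed to be such that all denominators are nonzero. *)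

(* Defs.v *)
From HB Require Import structures.
From mathcomp Require Import all_boot all_order all_algebra.
From mathcomp Require Import complex.
From mathcomp Require Import reals.
Set Implicit Arguments. Unset Strict Implicit. Unset Printing Implicit Defensive.
Import Order.TTheory GRing.Theory Num.Theory.
Local Open Scope ring_scope.

Definition binom (F : fieldType) (z : F) (k : nat) : F :=
  (\prod_(i < k) (z - i%:R)) / (k`!)%:R.

Definition Hx (F : fieldType) (m : nat) (x : F) : F :=
  \sum_(1 <= j < m.+1) (x + j%:R)^-1.

Definition Hn (F : fieldType) (m : nat) : F := Hx m 0.

(* Main.v *)
Require Import Defs.
From HB Require Import structures.
From mathcomp Require Import all_boot all_order all_algebra.
From mathcomp Require Import complex.
From mathcomp Require Import reals.
From mathcomp Require Import ring lra zify.
Import Order.TTheory GRing.Theory Num.Theory.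
Local Open Scope ring_scope.

Definition rise {F : nzRingType} (a : F) k := \prod_(i < k) (a + i%:R).

Lemma binom_rise (F : fieldType) (z : F) k :
  binom (z + k%:R) k = rise (z + 1) k / (k`!)%:R.
Proof.
rewrite /binom /rise; congr (_ / _).
rewrite (reindex_inj rev_ord_inj) /=; apply: eq_bigr => i _.
rewrite natrB ?ltn_ord // -addn1 natrD; ring.
Qed.

Lemma coef_prod_lin (F : fieldType) (s : seq (F * F)) :
  all (fun p => p.1 != 0) s ->
  let E := \prod_(p <- s) (p.1%:P + p.2 *: 'X) in
  let Pa := \prod_(p <- s) p.1 in
  let S1 := \sum_(p <- s) p.2 / p.1 in
  let S2 := \sum_(p <- s) (p.2 / p.1) ^+ 2 in
  [/\ E`_0 = Pa, E`_1 = Pa * S1 & E`_2 * 2%:R = Pa * (S1 ^+ 2 - S2)].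
Proof.
elim: s => [|[a b] s IH] /=.
  rewrite !big_nil !coefC /= expr0n /= subrr !mulr0; split => //; by rewrite mul0r.
move=> /andP[/= a0 /IH[h0 h1 h2]].
rewrite !big_cons /=.
have cf i : ((a%:P + b *: 'X) * \prod_(p <- s) (p.1%:P + p.2 *: 'X))`_i =
    a * (\prod_(p <- s) (p.1%:P + p.2 *: 'X))`_i +
    b * (if i is i'.+1 then (\prod_(p <- s) (p.1%:P + p.2 *: 'X))`_i' else 0).
  by rewrite mulrDl coefD coefCM -scalerAl coefZ coefXM; case: i.
rewrite !cf h0 h1; split.
- by rewrite mulr0 addr0.
- by field.
- by rewrite mulrDl -!mulrA h2; field.
Qed.

Lemma natr_neq0 (F : numFieldType) m : (0 < m)%N -> (m%:R : F) != 0.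
Proof. by rewrite pnatr_eq0 -lt0n. Qed.

Definition rk {F : numFieldType} n (x : F) k :=
  (-1) ^+ k * ('C(n, k))%:R * (rise (2%:R * x + 1) k / rise (2%:R * x + n%:R + 1) k).
Definition prodp {F : numFieldType} (x c : F) k := \prod_(j < k) (x + j%:R + c).
Definition prodm {F : numFieldType} n (x c : F) k := \prod_(j < n - k) (x + (k + j)%:R + c).
Definition Tr {F : numFieldType} n (x : F) k :=
  rk n x k * ((1 + 2%:R * x + 2%:R * k%:R) / (1 + 2%:R * x + n%:R + k%:R)).
Definition ell {F : numFieldType} n (x y : F) k :=
  Tr n x k * prodp x (1 + y) k * prodm n x (1 - y) k.
Definition GG {F : numFieldType} n (x y : F) k :=
  - (k%:R * (k%:R + x)) * rk n x k * prodp x (2%:R + y) k.-1 * prodm n x (- y) k.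

Lemma rise_neq0 (F : numFieldType) (a : F) k :
  (forall i, (i < k)%N -> a + i%:R != 0) -> rise a k != 0.
Proof. by move=> h; apply/prodf_neq0 => i _; apply: h. Qed.

Lemma rkS (F : numFieldType) n (x : F) k : (k < n)%N ->
  (forall i, (i <= n)%N -> 1 + 2%:R * x + n%:R + i%:R != 0) ->
  rk n x k.+1 = - rk n x k * (n - k)%:R / (k.+1)%:R
     * (2%:R * x + 1 + k%:R) / (1 + 2%:R * x + n%:R + k%:R).
Proof.
move=> kn hd.
have hb : ('C(n, k.+1))%:R = ('C(n, k))%:R * (n - k)%:R / (k.+1)%:R :> F.
  rewrite -(mulfK (natr_neq0 F _ (ltn0Sn k)) ('C(n, k.+1))%:R).
  rewrite -[X in X / _ = _]natrM mulnC mul_bin_left.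
  by rewrite natrM (mulrC (n - k)%:R).
have r0 : rise (2%:R * x + n%:R + 1) k != 0.
  apply: rise_neq0 => i ik; rewrite (_ : _ + _ + _ + _ = 1 + 2%:R * x + n%:R + i%:R);
    last by ring.
  by apply: hd; rewrite ltnW // (ltn_trans ik).
have d0 := hd k (ltnW kn).
have k0 := natr_neq0 F _ (ltn0Sn k).
rewrite /rk /rise !big_ord_recr /= -/(rise _ _) exprS hb.
rewrite -/(rise (2%:R * x + 1) k) -/(rise (2%:R * x + n%:R + 1) k).
field.
by rewrite d0 r0 nat1r k0.
Qed.

Lemma prodpS (F : numFieldType) (x c : F) k :
  prodp x c k.+1 = prodp x c k * (x + k%:R + c).
Proof. by rewrite /prodp big_ord_recr. Qed.

Lemma prodpSl (F : numFieldType) (x c : F) k :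
  prodp x c k.+1 = (x + c) * prodp x (c + 1) k.
Proof.
rewrite /prodp big_ord_recl /= addr0; congr (_ * _); apply: eq_bigr => i _.
rewrite /bump /= add1n -natr1; ring.
Qed.

Lemma prodm_first (F : numFieldType) n (x c : F) k : (k < n)%N ->
  prodm n x c k = (x + k%:R + c) * prodm n x c k.+1.
Proof.
move=> kn; rewrite /prodm -(subnSK kn) big_ord_recl /= addn0; congr (_ * _).
by apply: eq_bigr => i _; rewrite /bump /= add1n addnS addSn.
Qed.

Lemma prodm_last (F : numFieldType) n (x c : F) k : (k < n)%N ->
  prodm n x (c + 1) k = prodm n x c k.+1 * (x + n%:R + c).
Proof.
move=> kn; rewrite /prodm -(subnSK kn) big_ord_recr /=; congr (_ * _).
  by apply: eq_bigr => i _; rewrite addSn -natr1; ring.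
have e : (k + (n - k.+1)).+1 = n by rewrite -addnS subnSK // subnKC // ltnW.
rewrite -[in RHS]e -natr1; ring.
Qed.

Lemma prodm_n (F : numFieldType) n (x c : F) : prodm n x c n = 1.
Proof. by rewrite /prodm subnn big_ord0. Qed.

Lemma GG_step (F : numFieldType) n (x y : F) k : (0 < n)%N -> (k <= n)%N ->
  (forall i, (i <= n)%N -> 1 + 2%:R * x + n%:R + i%:R != 0) ->
  GG n x y k.+1 - GG n x y k =
    (n%:R - 1 - y) * ell n x (y + 1) k + (y + 1) * ell n x y k.
Proof.
move=> n0 kn hd.
have e1 : 1 + (y + 1) = 2%:R + y by ring.
have e2 : 1 - (y + 1) = - y by ring.
have e3 : 1 - y = - y + 1 by ring.
have e4 : 1 + y + 1 = 2%:R + y by ring.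
rewrite /ell e1 e2 e3.
case: k kn => [|k] kn.
  rewrite /GG /Tr mul0r oppr0 !mul0r subr0 (prodm_last _ _ _ _ _ n0) (prodm_first _ _ _ _ _ n0).
  rewrite (rkS _ _ _ _ n0 hd) /prodp !big_ord0 /rk /rise !big_ord0 expr0 bin0.
  have d0 : 1 + 2%:R * x + n%:R != 0 by have := hd 0%N (leq0n _); rewrite addr0.
  by rewrite subn0; field.
have d0 := hd k.+1 kn.
have kn' := ltnW kn.
case: (ltngtP k.+1 n) => [kn1|kn1|kn1]; [ | by rewrite ltnNge kn in kn1 | ].
  rewrite /GG /Tr /= (rkS _ _ _ _ kn1 hd) (prodpSl _ _ (1 + y)) e4 !prodpS.
  rewrite (prodm_first _ _ _ _ _ kn1) (prodm_last _ _ _ _ _ kn1).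
  rewrite natrB // -!natr1.
  field.
  by rewrite !natr1 d0 pnatr_eq0.
have -> : GG n x y k.+2 = 0.
  by rewrite /GG /rk bin_small -?kn1 // !(mulr0, mul0r, oppr0).
rewrite /GG /Tr /= (prodpSl _ _ (1 + y)) e4 !prodpS kn1 !prodm_n.
rewrite -kn1 in d0 *.
rewrite -[(k.+1)%:R]natr1.
field.
by rewrite natr1.
Qed.

Definition LL {F : numFieldType} n (x y : F) := \sum_(k < n.+1) ell n x y k.

Lemma LL_rec (F : numFieldType) n (x y : F) : (0 < n)%N ->
  (forall i, (i <= n)%N -> 1 + 2%:R * x + n%:R + i%:R != 0) ->
  (n%:R - 1 - y) * LL n x (y + 1) + (y + 1) * LL n x y = 0.
Proof.
move=> n0 hd.
rewrite /LL !mulr_sumr -big_split /=.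
have := @telescope_sumr_eq _ 0 n.+1 (GG n x y)
  (fun k => (n%:R - 1 - y) * ell n x (y + 1) k + (y + 1) * ell n x y k) (leq0n _).
rewrite big_mkord => ->; last by move=> k /andP[_ kn]; rewrite GG_step.
by rewrite /GG /rk bin_small // !(mulr0, mul0r, oppr0) addr0.
Qed.

Lemma LL_zero (F : numFieldType) n (x : F) : (0 < n)%N ->
  (forall i, (i <= n)%N -> 1 + 2%:R * x + n%:R + i%:R != 0) ->
  forall m, (m < n)%N -> LL n x m%:R = 0.
Proof.
move=> n0 hd; elim=> [|m IH] mn.
  have := @LL_rec F n x (-1) n0 hd.
  rewrite addNr mul0r addr0 (_ : n%:R - 1 - -1 = n%:R :> F); last by ring.
  by move/eqP; rewrite mulf_eq0 pnatr_eq0 (negbTE (lt0n_neq0 n0)) /= => /eqP.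
have := @LL_rec F n x m%:R n0 hd.
rewrite IH ?(ltnW mn) // mulr0 addr0 natr1.
rewrite (_ : n%:R - 1 - m%:R = (n - m.+1)%:R :> F); last first.
  by rewrite natrB ?(ltnW mn) // mulrSr; ring.
by move/eqP; rewrite mulf_eq0 pnatr_eq0 subn_eq0 leqNgt mn /= => /eqP.
Qed.

Definition lin {F : fieldType} (p : F * F) : {poly F} := p.1%:P + p.2 *: 'X.
Definition pk {F : numFieldType} n (x : F) k : seq (F * F) :=
  [seq (x + j%:R + 1, 1) | j <- iota 0 k] ++
  [seq (x + (k + j)%:R + 1, -1) | j <- iota 0 (n - k)].
Definition Lp {F : numFieldType} n (x : F) :=
  \sum_(k < n.+1) Tr n x k *: \prod_(p <- pk n x k) lin p.
Definition qs {F : numFieldType} m : seq (F * F) := [seq ((j.+1)%:R, -1) | j <- iota 0 m].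
Definition Qp {F : numFieldType} n : {poly F} := - 'X * \prod_(p <- qs n.-1) lin p.

Lemma big_iota0 (R : Type) (idx : R) (op : Monoid.law idx) k (f : nat -> R) :
  \big[op/idx]_(j <- iota 0 k) f j = \big[op/idx]_(j < k) f j.
Proof. by rewrite -(big_mkord xpredT f) /index_iota subn0. Qed.

Lemma lin_eval (F : fieldType) (p : F * F) y : (lin p).[y] = p.1 + p.2 * y.
Proof. by rewrite /lin hornerD hornerC hornerZ hornerX. Qed.

Lemma Lp_eval (F : numFieldType) n (x y : F) : (Lp n x).[y] = LL n x y.
Proof.
rewrite /Lp /LL horner_sum; apply: eq_bigr => k _.
rewrite hornerZ horner_prod big_cat !big_map /ell /prodp /prodm !big_iota0 -mulrA.
congr (_ * (_ * _)); apply: eq_bigr => j _; rewrite lin_eval /=; ring.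
Qed.

Lemma Qp_eval (F : numFieldType) n (y : F) :
  (Qp n).[y] = - y * \prod_(j < n.-1) ((j.+1)%:R - y).
Proof.
rewrite /Qp hornerM hornerN hornerX horner_prod big_map big_iota0.
by congr (_ * _); apply: eq_bigr => j _; rewrite lin_eval /=; ring.
Qed.

Lemma size_prod_lin (F : fieldType) (s : seq (F * F)) :
  (size (\prod_(p <- s) lin p)%R <= (size s).+1)%N.
Proof.
elim: s => [|p s IH]; first by rewrite big_nil size_poly1.
rewrite big_cons /=; apply: leq_trans (size_polyMleq _ _) _.
have h : (size (lin p) <= 2)%N.
  apply: leq_trans (size_polyD _ _) _; rewrite geq_max.
  rewrite (leq_trans (size_polyC_leq1 _)) //.
  by rewrite (leq_trans (size_scale_leq _ _)) // size_polyX.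
move: h IH; set a := size (lin p); set b := size _; lia.
Qed.

Lemma size_pk (F : numFieldType) n (x : F) k : (k <= n)%N -> size (pk n x k) = n.
Proof. by move=> kn; rewrite size_cat !size_map !size_iota subnKC. Qed.

Lemma Qp_neq0 (F : numFieldType) n (x : F) : (0 < n)%N ->
  (forall j, (j < n)%N -> x + j%:R + 1 != 0) -> (Qp n).[- x - 1] != 0.
Proof.
move=> n0 hx; rewrite Qp_eval mulf_neq0 //.
  by rewrite opprB opprK (_ : 1 + x = x + 0%:R + 1) ?hx //; ring.
apply/prodf_neq0 => j _.
rewrite (_ : _ - _ = x + (j.+1)%:R + 1); last by rewrite -natr1; ring.
by apply: hx; have := ltn_ord j; rewrite -ltnS prednK.
Qed.

Lemma Lp_eq (F : numFieldType) n (x : F) : (0 < n)%N ->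
  (forall i, (i <= n)%N -> 1 + 2%:R * x + n%:R + i%:R != 0) ->
  (forall j, (j < n)%N -> x + j%:R + 1 != 0) ->
  Lp n x = (LL n x (- x - 1) / (Qp n).[- x - 1]) *: Qp n.
Proof.
move=> n0 hd hx.
set c := _ / _.
apply/eqP; rewrite -subr_eq0; apply/negPn/negP => D0.
set rs := (- x - 1) :: [seq i%:R | i <- iota 0 n].
have hall : all (root (Lp n x - c *: Qp n)) rs.
  rewrite /= /root !(hornerD, hornerN, hornerZ) Lp_eval; apply/andP; split.
    by rewrite /c divfK ?subrr // Qp_neq0.
  rewrite all_map; apply/allP => i; rewrite mem_iota add0n => /andP[_ ilt] /=.
  rewrite /root !(hornerD, hornerN, hornerZ) Lp_eval LL_zero // Qp_eval.
  case: i ilt => [|i] ilt; first by rewrite oppr0 !mul0r mulr0 subrr.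
  have ilt' : (i < n.-1)%N by rewrite -ltnS prednK.
  rewrite (bigD1 (Ordinal ilt')) //= subrr !(mul0r, mulr0) subrr //.
have hu : uniq rs.
  rewrite /= map_inj_uniq ?iota_uniq ?andbT; last first.
    by move=> a b /eqP; rewrite eqr_nat => /eqP.
  rewrite -has_pred1 has_map; apply/hasPn => i; rewrite mem_iota add0n => /andP[_ ilt] /=.
  rewrite -subr_eq0 (_ : _ - _ = x + i%:R + 1); last by ring.
  exact: hx.
have := max_poly_roots D0 hall hu.
rewrite /= size_map size_iota ltnNge => /negP; apply.
apply: leq_trans (size_polyD _ _) _; rewrite geq_max size_polyN; apply/andP; split.
  rewrite /Lp; apply: (big_ind (fun p : {poly F} => (size p <= n.+1)%N)).
  - by rewrite size_poly0.
  - by move=> p q hp hq; apply: leq_trans (size_polyD _ _) _; rewrite geq_max hp hq.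
  move=> [k kn] _; apply: leq_trans (size_scale_leq _ _) _.
  by have h := @size_prod_lin F (pk n x k); rewrite size_pk // in h.
apply: leq_trans (size_scale_leq _ _) _.
rewrite /Qp; apply: leq_trans (size_polyMleq _ _) _.
have h := @size_prod_lin F (qs n.-1).
rewrite /qs size_map size_iota prednK // in h.
rewrite size_polyN size_polyX; move: h; set a := size _; lia.
Qed.

Lemma big_iota_split {R : Type} {idx : R} {op : Monoid.law idx} n k (f : nat -> R) :
  (k <= n)%N ->
  \big[op/idx]_(j <- iota 0 n) f j =
  op (\big[op/idx]_(j <- iota 0 k) f j) (\big[op/idx]_(j <- iota 0 (n - k)) f (k + j)%N).
Proof.
move=> kn; rewrite -{1}(subnKC kn) iotaD big_cat add0n -{2}(addn0 k) iotaDl big_map.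
by [].
Qed.

Definition hh {F : numFieldType} (x : F) m := \sum_(j <- iota 0 m) (x + j%:R + 1)^-1.
Definition PI {F : numFieldType} n (x : F) := \prod_(j <- iota 0 n) (x + j%:R + 1).
Definition K2 {F : numFieldType} n (x : F) := \sum_(j <- iota 0 n) ((x + j%:R + 1)^-1) ^+ 2.

Lemma pk_coefs (F : numFieldType) n (x : F) k : (k <= n)%N ->
  (forall j, (j < n)%N -> x + j%:R + 1 != 0) ->
  let E := \prod_(p <- pk n x k) lin p in
  [/\ E`_0 = PI n x, E`_1 = PI n x * (2%:R * hh x k - hh x n)
    & E`_2 * 2%:R = PI n x * ((2%:R * hh x k - hh x n) ^+ 2 - K2 n x)].
Proof.
move=> kn hx /=.
have ha : all (fun p => p.1 != 0) (pk n x k).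
  rewrite all_cat !all_map; apply/andP; split; apply/allP => j;
    rewrite mem_iota add0n => /andP[_ jl] /=; apply: hx.
    by apply: leq_trans jl kn.
  by rewrite -(subnKC kn) ltn_add2l.
have [h0 h1 h2] := @coef_prod_lin F _ ha.
rewrite /lin.
have ePa : \prod_(p <- pk n x k) p.1 = PI n x.
  by rewrite /PI (big_iota_split _ _ _ kn) big_cat !big_map.
have eS1 : \sum_(p <- pk n x k) p.2 / p.1 = 2%:R * hh x k - hh x n.
  rewrite /hh (big_iota_split _ _ _ kn) big_cat !big_map /=.
  rewrite [X in _ + X](eq_bigr (fun j => - (x + (k + j)%:R + 1)^-1)); last first.
    by move=> j _; rewrite mulNr mul1r.
  rewrite sumrN (eq_bigr (fun j => (x + j%:R + 1)^-1)); last by move=> j _; rewrite mul1r.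
  ring.
have eS2 : \sum_(p <- pk n x k) (p.2 / p.1) ^+ 2 = K2 n x.
  rewrite /K2 (big_iota_split _ _ _ kn) big_cat !big_map /=.
  congr (_ + _); apply: eq_bigr => j _; rewrite ?mul1r ?mulN1r ?sqrrN //.
by rewrite h0 h1 h2 ePa eS1 eS2.
Qed.

Lemma prod_fact (F : numFieldType) m :
  \prod_(j <- iota 0 m) ((j.+1)%:R : F) = (m`!)%:R.
Proof.
elim: m => [|m IH]; first by rewrite big_nil.
by rewrite -addn1 iotaD big_cat /= big_seq1 IH add0n addn1 factS natrM mulrC.
Qed.

Lemma Hx_hh (F : numFieldType) (x : F) k : Hx k x = hh x k.
Proof.
rewrite /Hx /hh big_add1 /= /index_iota subn0; apply: eq_bigr => j _.
by rewrite -natr1 addrA.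
Qed.

Lemma Qp_coefs (F : numFieldType) n : (0 < n)%N ->
  [/\ (Qp n)`_0 = 0 :> F, (Qp n)`_1 = - ((n.-1)`!)%:R :> F
    & (Qp n)`_2 = ((n.-1)`!)%:R * Hn F n.-1 :> F].
Proof.
move=> n0.
have ha : all (fun p => p.1 != 0) (qs n.-1 : seq (F * F)).
  by rewrite all_map; apply/allP => j _ /=; rewrite pnatr_eq0.
have [h0 h1 h2] := @coef_prod_lin F _ ha.
rewrite /Qp !mulNr !coefN !coefXM /lin h0 h1 !big_map prod_fact /Hn Hx_hh /hh.
split => //; first by rewrite oppr0.
rewrite /= -mulrN -sumrN; congr (_ * _); apply: eq_bigr => j _ /=.
by rewrite add0r mulN1r -natr1 opprK.
Qed.

Lemma LL_at (F : numFieldType) n (x : F) :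
  LL n x (- x - 1) = Tr n x 0 * \prod_(j < n) (x + j%:R + (2%:R + x)).
Proof.
rewrite /LL big_ord_recl big1 ?addr0.
  rewrite /ell /prodp /prodm big_ord0 mulr1 subn0; congr (_ * _).
  by apply: eq_bigr => j _; rewrite add0n; ring.
move=> k _; rewrite /ell /= prodpSl (_ : x + (1 + (- x - 1)) = 0) ?(mul0r, mulr0) //.
ring.
Qed.

Lemma Qp_at (F : numFieldType) n (x : F) : (0 < n)%N -> (Qp n).[- x - 1] = PI n x.
Proof.
case: n => [//|n] _; rewrite Qp_eval /PI big_iota0 big_ord_recl /=.
congr (_ * _); first ring.
by apply: eq_bigr => j _; rewrite /bump /= add1n -natr1; ring.
Qed.

Lemma rise_rel (F : numFieldType) n (x : F) :
  (1 + 2%:R * x) * \prod_(j < n) (x + j%:R + (2%:R + x)) =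
  rise (2%:R * x + 1) n * (2%:R * x + 1 + n%:R).
Proof.
have e1 : rise (2%:R * x + 1) n.+1 =
    (2%:R * x + 1 + 0%:R) * \prod_(j < n) (2%:R * x + 1 + (bump 0 j)%:R).
  by rewrite /rise big_ord_recl.
have e2 : rise (2%:R * x + 1) n.+1 = rise (2%:R * x + 1) n * (2%:R * x + 1 + n%:R).
  by rewrite /rise big_ord_recr.
rewrite -e2 e1 addr0; congr (_ * _); first ring.
by apply: eq_bigr => j _; rewrite /bump /= add1n -natr1; ring.
Qed.

Lemma rise_PI (F : numFieldType) n (x : F) : rise (x + 1) n = PI n x.
Proof. by rewrite /rise /PI big_iota0; apply: eq_bigr => j _; ring. Qed.

Lemma main_gen (F : numFieldType) n (x : F) : (0 < n)%N ->
  (forall i, (i <= n)%N -> 1 + 2%:R * x + n%:R + i%:R != 0) ->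
  (forall j, (j < n)%N -> x + j%:R + 1 != 0) ->
  \sum_(k < n.+1) Tr n x k * (hh x k) ^+ 2 =
  ((2 * n)%:R)^-1 * ((rise (2%:R * x + 1) n / (n`!)%:R) / (PI n x / (n`!)%:R) ^+ 2)
    * (Hn F n.-1 - hh x n).
Proof.
move=> n0 hd hx.
have PI0 : PI n x != 0.
  rewrite /PI prodf_seq_neq0; apply/allP => j; rewrite mem_iota add0n => /andP[_ jn].
  exact: hx.
have eL := @Lp_eq F n x n0 hd hx.
set c := _ / _ in eL.
have coefL i : (Lp n x)`_i =
    \sum_(k < n.+1) Tr n x k * (\prod_(p <- pk n x k) lin p)`_i.
  by rewrite /Lp coef_sum; apply: eq_bigr => k _; rewrite coefZ.
have [q0 q1 q2] := @Qp_coefs F n n0.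
set m := n.-1 in q1 q2 *.
set S0 := \sum_(k < n.+1) Tr n x k.
set S1 := \sum_(k < n.+1) Tr n x k * hh x k.
set S2 := \sum_(k < n.+1) Tr n x k * (hh x k) ^+ 2.
have E0 : PI n x * S0 = 0.
  have := coefL 0%N; rewrite eL coefZ q0 mulr0 => /esym.
  rewrite (eq_bigr (fun k : 'I_n.+1 => Tr n x k * PI n x)); last first.
    by move=> [k kn] _; have [-> _ _] := @pk_coefs F n x k (ltnSE kn) hx.
  by rewrite -mulr_suml mulrC.
have S00 : S0 = 0 by move/eqP: E0; rewrite mulf_eq0 (negbTE PI0) => /eqP.
have E1 : PI n x * 2%:R * S1 - PI n x * hh x n * S0 = c * - (m`!)%:R.
  have := coefL 1%N; rewrite eL coefZ q1 => ->.
  rewrite (eq_bigr (fun k : 'I_n.+1 => Tr n x k * (PI n x * (2%:R * hh x k - hh x n)))); last first.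
    by move=> [k kn] _; have [_ -> _] := @pk_coefs F n x k (ltnSE kn) hx.
  rewrite (eq_bigr (fun k : 'I_n.+1 => PI n x * 2%:R * (Tr n x k * hh x k)
      - PI n x * hh x n * Tr n x k)); last by move=> k _; ring.
  by rewrite sumrB -!mulr_sumr.
have E2 : PI n x * 4%:R * S2 - PI n x * 4%:R * hh x n * S1
      + PI n x * (hh x n ^+ 2 - K2 n x) * S0 = c * ((m`!)%:R * Hn F m) * 2%:R.
  have := coefL 2%N; rewrite eL coefZ q2 => /(congr1 (fun t => t * 2%:R)) ->.
  rewrite mulr_suml.
  rewrite (eq_bigr (fun k : 'I_n.+1 => Tr n x k *
     (PI n x * ((2%:R * hh x k - hh x n) ^+ 2 - K2 n x)))); last first.
    by move=> [k kn] _; have [_ _ <-] := @pk_coefs F n x k (ltnSE kn) hx; rewrite mulrA.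
  rewrite (eq_bigr (fun k : 'I_n.+1 => PI n x * 4%:R * (Tr n x k * hh x k ^+ 2)
      - PI n x * 4%:R * hh x n * (Tr n x k * hh x k)
      + PI n x * (hh x n ^+ 2 - K2 n x) * Tr n x k)); last by move=> k _; ring.
  by rewrite big_split sumrB -!mulr_sumr.
have cE : c = rise (2%:R * x + 1) n / PI n x.
  have d0 : 1 + 2%:R * x + n%:R != 0 by have := hd 0%N (leq0n _); rewrite addr0.
  have d1 : 2%:R * x + 1 + n%:R != 0.
    by rewrite (_ : 2%:R * x + 1 + n%:R = 1 + 2%:R * x + n%:R) //; ring.
  have eR1 : rise (2%:R * x + 1) n =
      (1 + 2%:R * x) * \prod_(j < n) (x + j%:R + (2%:R + x)) / (2%:R * x + 1 + n%:R).
    by rewrite rise_rel mulfK.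
  rewrite /c LL_at Qp_at // eR1 /Tr /rk expr0 bin0 /rise !big_ord0 !addr0.
  by field; rewrite PI0 d1.
rewrite S00 !mulr0 subr0 addr0 in E1 E2.
have two0 : (2%:R : F) != 0 by rewrite pnatr_eq0.
have four0 : (4%:R : F) != 0 by rewrite pnatr_eq0.
have nn0 : (n%:R : F) != 0 by rewrite pnatr_eq0 -lt0n.
have mf0 : ((m`!)%:R : F) != 0 by rewrite pnatr_eq0 -lt0n fact_gt0.
have eS1 : S1 = c * - (m`!)%:R / (PI n x * 2%:R) by rewrite -E1; field.
have eS2 : S2 = (c * ((m`!)%:R * Hn F m) * 2%:R + PI n x * 4%:R * hh x n * S1)
    / (PI n x * 4%:R) by rewrite -E2; field.
have en : (n`!)%:R = n%:R * (m`!)%:R :> F.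
  by rewrite -natrM /m -{1}(prednK n0) factS prednK.
rewrite eS2 eS1 cE en natrM.
by field; rewrite mf0 nn0 PI0.
Qed.


Lemma divdiv (F : fieldType) (r1 r2 f : F) : f != 0 -> (r1 / f) / (r2 / f) = r1 / r2.
Proof. by move=> f0; rewrite invf_div mulrA divfK. Qed.

Local Open Scope complex_scope.

Theorem theorem7 (R : realType) (n : nat) (x : R[i])
  (hn : (0 < n)%N)
  (hxj : forall j : nat, (1 <= j <= n)%N -> x + j%:R != 0)
  (hbin : forall k : nat, (k <= n)%N -> binom (2%:R * x + n%:R + k%:R) k != 0)
  (hden : forall k : nat, (k <= n)%N -> 1 + 2%:R * x + n%:R + k%:R != 0)
  (hbin2 : binom (x + n%:R) n != 0) :
  \sum_(0 <= k < n.+1)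
     (-1) ^+ k * ('C(n, k))%:R
     * (binom (2%:R * x + k%:R) k / binom (2%:R * x + n%:R + k%:R) k)
     * ((1 + 2%:R * x + 2%:R * k%:R) / (1 + 2%:R * x + n%:R + k%:R))
     * (Hx k x) ^+ 2
  = ((2 * n)%:R)^-1 * (binom (2%:R * x + n%:R) n / (binom (x + n%:R) n) ^+ 2)
     * (Hn _ n.-1 - Hx n x).
Proof.
have hx : forall j, (j < n)%N -> x + j%:R + 1 != 0.
  by move=> j jn; rewrite -addrA natr1 hxj.
have := @main_gen _ n x hn hden hx.
rewrite -rise_PI -Hx_hh => e.
rewrite !binom_rise; apply: etrans (etrans _ e) => //.
rewrite big_mkord; apply: eq_bigr => k _.
rewrite Hx_hh /Tr /rk !binom_rise.
by rewrite (@divdiv _ _ _ _ (natr_neq0 _ _ (fact_gt0 k))).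
Qed.
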